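(* For every integer $n\geq -2$, the polynomial $e_1^{n}\,\tilde e_1^{\,n}\in\mathbb{Z}\langle X\rangle$ is a polynomial with Jordan property.
   Context: Rings are associative with $1$; homomorphisms preserve $1$. A Jordan homomorphism $\alpha:R\to R'$ is a map with $(a+b)^\alpha=a^\alpha+b^\alpha$, $1^\alpha=1'$, $(aba)^\alpha=a^\alpha b^\alpha a^\alpha$ for all $a,b\in R$. Let $\mathbb{Z}\langle X\rangle$ be the free $\mathbb{Z}$-algebra on non-commuting indeterminates $x_1,x_2,\ldots$. For a finite or infinite sequence $T=(t_1,t_2,\ldots)$ in a ring $R$, $f(T)$ denotes the image of $f\in\mathbb{Z}\langle X\rangle$ under the homomorphism $x_i\mapsto t_i$ (finite sequences are padded with zeros). A polynomial $f$ has the Jordan property if $f(T)^\alpha=f(T^\alpha)$ for every Jordan homomorphism $\alpha:R\to R'$ between arbitrary rings and every finite or infinite sequence $T$ in $R$, where $T^\alpha=(t_1^\alpha,t_2^\alpha,\ldots)$. Define $e^{(-2)}:=-1$, $e^{(-1)}:=0$, $e^{(0)}:=1$, $e^{(n)}:=e^{(n-1)}x_n-e^{(n-2)}$ for $n\geq1$. Put $e_1^{m}:=e^{(m)}$ for $m\geq-2$, and $\tilde e_1^{\,m}:=e^{(m)}(x_m,x_{m-1},\ldots,x_1)$ (substituting $x_i\mapsto x_{m+1-i}$ for $i\leq m$) for $m\geq1$, $\tilde e_1^{\,m}:=e^{(m)}$ for $-2\leq m\leq 0$. *)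

(* Defs.v *)
From HB Require Import structures.
From mathcomp Require Import all_boot all_order all_algebra.
Set Implicit Arguments. Unset Strict Implicit. Unset Printing Implicit Defensive.
Import GRing.Theory Num.Theory.
Local Open Scope ring_scope.

(* Elements of the free Z-algebra Z<X> on non-commuting indeterminates
   x_1, x_2, ..., represented by formal ring expressions.
   [Var i] stands for the indeterminate x_(i+1) (0-based index). *)
Inductive zpoly : Type :=
| Var of nat
| Zero
| One
| Add of zpoly & zpoly
| Opp of zpoly
| Mul of zpoly & zpoly.

(* f(T): image of f under the ring homomorphism x_(i+1) |-> T i.
   A (finite or infinite) sequence t_1, t_2, ... is a map T : nat -> R
   with T i = t_(i+1) (finite sequences padded with zeros). *)
Fixpoint zeval (R : pzRingType) (T : nat -> R) (f : zpoly) : R :=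
  match f with
  | Var i => T i
  | Zero => 0
  | One => 1
  | Add f g => zeval T f + zeval T g
  | Opp f => - zeval T f
  | Mul f g => zeval T f * zeval T g
  end.

Fixpoint zsubst (s : nat -> zpoly) (f : zpoly) : zpoly :=
  match f with
  | Var i => s i
  | Zero => Zero
  | One => One
  | Add f g => Add (zsubst s f) (zsubst s g)
  | Opp f => Opp (zsubst s f)
  | Mul f g => Mul (zsubst s f) (zsubst s g)
  end.

Definition jordan_hom (R R' : pzRingType) (alpha : R -> R') : Prop :=
  [/\ forall a b, alpha (a + b) = alpha a + alpha b,
      alpha 1 = 1
    & forall a b, alpha (a * b * a) = alpha a * alpha b * alpha a].

Definition jordan_property (f : zpoly) : Prop :=
  forall (R R' : pzRingType) (alpha : R -> R'), jordan_hom alpha ->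
  forall T : nat -> R, alpha (zeval T f) = zeval (fun i => alpha (T i)) f.

(* epair n = (e^(n-1), e^(n)) for n : nat, with
   e^(-1) = 0, e^(0) = 1, e^(n) = e^(n-1) x_n - e^(n-2) (n >= 1),
   e^(-2) = -1, and x_n = Var (n-1). *)
Fixpoint epair (n : nat) : zpoly * zpoly :=
  match n with
  | 0 => (Zero, One)
  | j.+1 =>
      let p := epair j in
      (p.2, Add (Mul p.2 (Var j)) (Opp p.1))
  end.

(* eseq k = e^(k-2). *)
Definition eseq (k : nat) : zpoly :=
  match k with
  | 0 => Opp One
  | 1 => Zero
  | k'.+2 => (epair k').2
  end.

(* e^(n) for an integer n >= -2 (arbitrary junk for n < -2). *)
Definition e_poly (n : int) : zpoly := eseq (absz (n + 2)).

Definition e1 (n : int) : zpoly := e_poly n.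

(* tilde e_1^m := e^(m)(x_m, ..., x_1) for m >= 1, i.e. substitute
   x_i |-> x_(m+1-i) for i <= m; tilde e_1^m := e^(m) for -2 <= m <= 0. *)
Definition e1_tilde (m : int) : zpoly :=
  if (1 <= m) then
    let k := absz m in
    zsubst (fun i => if (i < k)%N then Var (k - 1 - i)%N else Var i) (e_poly m)
  else e_poly m.

(* Main.v *)
Require Import Defs.
From mathcomp Require Import all_boot all_order all_algebra.
From mathcomp Require Import zify.
Local Open Scope ring_scope.
Import GRing.Theory.
Set Implicit Arguments. Unset Strict Implicit.

Lemma addr_cong2 (V : zmodType) (x y z : V) : y = z -> x + y = x + z.
Proof. by move=> ->. Qed.

Ltac rmv a r := match r with
 | ?y + ?r' => let t := constr:(ltac:(unify y a; exact tt) : unit) in r'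
 | ?x + ?y => let t := constr:(ltac:(unify y a; exact tt) : unit) in x
 | ?x + ?r' => let r'' := rmv a r' in constr:(x + r'')
 end.

Ltac pullout := first [ reflexivity | apply: addrC | (rewrite [LHS]addrCA; apply: addr_cong2; pullout) ].

Ltac acsolve := first [ reflexivity | lazymatch goal with
 | |- ?a + ?l = ?r => let r' := rmv a r in
      transitivity (a + r'); [apply: addr_cong2; acsolve | pullout]
 end ].

Ltac acnorm := do 3 rewrite ?mulrDl ?mulrDr ?mulNr ?mulrN ?opprD ?opprK ?mulrA; rewrite ?mulr1 ?mul1r ?mulr0 ?mul0r ?oppr0 ?addr0 ?add0r -?addrA.


Fixpoint cont (R : pzRingType) (S : nat -> R) (k : nat) : R * R :=
  match k with
  | 0 => (0, 1)
  | j.+1 => let p := cont S j in (p.2, p.2 * S j - p.1)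
  end.

Lemma cont_s1 (R : pzRingType) (S : nat -> R) k : (cont S k.+1).1 = (cont S k).2.
Proof. by []. Qed.
Lemma cont_s2 (R : pzRingType) (S : nat -> R) k :
  (cont S k.+1).2 = (cont S k).2 * S k - (cont S k).1.
Proof. by []. Qed.

Lemma zeval_epair (R : pzRingType) (T : nat -> R) k :
  (zeval T (epair k).1, zeval T (epair k).2) = cont T k.
Proof. by elim: k => [|k IH] //=; rewrite -IH. Qed.

Lemma zeval_epair2 (R : pzRingType) (T : nat -> R) k :
  zeval T (epair k).2 = (cont T k).2.
Proof. by rewrite -zeval_epair. Qed.

Lemma zeval_zsubst (R : pzRingType) (T : nat -> R) s f :
  zeval T (zsubst s f) = zeval (fun i => zeval T (s i)) f.
Proof. by elim: f => //= [f -> g ->|f ->|f -> g ->]. Qed.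

Lemma cont_ext (R : pzRingType) (S S' : nat -> R) k :
  (forall i, (i < k)%N -> S i = S' i) -> cont S k = cont S' k.
Proof.
elim: k => [|k IH] H //=.
rewrite IH ?H // => i Hi; apply: H; exact: ltnW.
Qed.

Definition cc (R : pzRingType) (S : nat -> R) k := (cont S k).2.
Lemma cc_rec (R : pzRingType) (S : nat -> R) k :
  cc S k.+2 = cc S k.+1 * S k.+1 - cc S k.
Proof. by []. Qed.
Lemma cc0 (R : pzRingType) (S : nat -> R) : cc S 0 = 1.
Proof. by []. Qed.
Lemma cc1 (R : pzRingType) (S : nat -> R) : cc S 1 = S 0%N.
Proof. by rewrite /cc /= mul1r subr0. Qed.
Lemma cc_ext (R : pzRingType) (S S' : nat -> R) k :
  (forall i, (i < k)%N -> S i = S' i) -> cc S k = cc S' k.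
Proof. by move=> H; rewrite /cc (cont_ext H). Qed.
Lemma zeval_cc (R : pzRingType) (T : nat -> R) k : zeval T (epair k).2 = cc T k.
Proof. exact: zeval_epair2. Qed.
Opaque cc.

Lemma cont_left (R : pzRingType) k : forall (S : nat -> R),
  cc S k.+2 = S 0%N * cc (fun i => S i.+1) k.+1 - cc (fun i => S i.+2) k.
Proof.
suff H : forall k (S : nat -> R),
  (cc S k.+2 = S 0%N * cc (fun i => S i.+1) k.+1 - cc (fun i => S i.+2) k) /\
  (cc S k.+3 = S 0%N * cc (fun i => S i.+1) k.+2 - cc (fun i => S i.+2) k.+1).
  by move=> S; case: (H k S).
clear k; elim=> [|k IH] S.
  rewrite !cc_rec !cc1 !cc0; split; acnorm; acsolve.
split; first by case: (IH S).
case: (IH S) => H1 H2.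
rewrite (cc_rec S k.+2) H2 H1 (cc_rec (fun i => S i.+1) k.+1) (cc_rec (fun i => S i.+2) k).
repeat match goal with |- context [cc ?f ?j] => generalize (cc f j); intro end; cbv beta; acnorm; acsolve.
Qed.

Definition rv (R : pzRingType) (k : nat) (T : nat -> R) (i : nat) : R :=
  if (i < k)%N then T (k - 1 - i)%N else T i.

Definition Bs (R : pzRingType) (T : nat -> R) (k : nat) : R := cc (rv k T) k.
Definition Bp (R : pzRingType) (T : nat -> R) (k : nat) : R :=
  match k with 0 => 0 | j.+1 => Bs T j end.
Definition As (R : pzRingType) (T : nat -> R) (k : nat) : R := cc T k.
Definition Ap (R : pzRingType) (T : nat -> R) (k : nat) : R := (cont T k).1.

Lemma Bs_rec (R : pzRingType) (T : nat -> R) k :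
  Bs T k.+1 = T k * Bs T k - Bp T k.
Proof.
case: k => [|k]; first by rewrite /Bs /= cc1 cc0 mulr1 subr0.
rewrite /Bs cont_left /=.
have -> : rv k.+2 T 0 = T k.+1 by rewrite /rv /=; congr T; lia.
congr (_ * _ - _); apply: cc_ext => i Hi; rewrite /rv.
  have -> : (i.+1 < k.+2)%N by lia.
  have -> : (i < k.+1)%N by lia.
  congr T; lia.
have -> : (i.+2 < k.+2)%N by lia.
rewrite Hi; congr T; lia.
Qed.

Record quad (R : Type) := Quad { q11 : R; q12 : R; q21 : R; q22 : R }.

Definition step (R : pzRingType) (t : R) (Y : quad R) : quad R :=
  Quad (t * q11 Y * t + q21 Y * t + t * q12 Y + q22 Y)
       (- (t * q11 Y + q21 Y)) (- (q11 Y * t + q12 Y)) (q11 Y).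

Fixpoint iterY (R : pzRingType) (T : nat -> R) (n : nat) (Y : quad R) : quad R :=
  match n with 0 => Y | k.+1 => iterY T k (step (T k) Y) end.

Definition Phi (R : pzRingType) (T : nat -> R) (k : nat) (Y : quad R) : R :=
  As T k * q11 Y * Bs T k + As T k * q12 Y * Bp T k
  + Ap T k * q21 Y * Bs T k + Ap T k * q22 Y * Bp T k.

Lemma Phi_step (R : pzRingType) (T : nat -> R) k Y :
  Phi T k.+1 Y = Phi T k (step (T k) Y).
Proof.
rewrite /Phi Bs_rec /=.
have -> : As T k.+1 = As T k * T k - Ap T k by [].
have -> : Ap T k.+1 = As T k by [].
acnorm; acsolve.
Qed.

Lemma Phi_iter (R : pzRingType) (T : nat -> R) n : forall Y,
  Phi T n Y = q11 (iterY T n Y).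
Proof.
elim: n => [|n IH] Y.
  by rewrite /Phi /Bp /As /Ap /Bs /= !mulr0 !mul0r !mulr1 !mul1r !addr0.
by rewrite Phi_step IH.
Qed.

Definition E1 (R : pzRingType) : quad R := Quad 1 0 0 0.

Lemma AB_iter (R : pzRingType) (T : nat -> R) n :
  As T n * Bs T n = q11 (iterY T n (E1 R)).
Proof. by rewrite -Phi_iter /Phi /= !mulr0 !mul0r !mulr1 !addr0. Qed.

Lemma jh0 (R R' : pzRingType) (al : R -> R') : jordan_hom al -> al 0 = 0.
Proof. by case=> hadd _ _; apply/(addrI (al 0)); rewrite -hadd !addr0. Qed.

Lemma jhN (R R' : pzRingType) (al : R -> R') : jordan_hom al -> forall a, al (- a) = - al a.
Proof.
move=> J a; have [hadd _ _] := J.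
by apply/(addrI (al a)); rewrite -hadd !subrr (jh0 J).
Qed.

Lemma jh3 (R R' : pzRingType) (al : R -> R') : jordan_hom al -> forall a b c,
  al (a * b * c + c * b * a) = al a * al b * al c + al c * al b * al a.
Proof.
case=> hadd h1 h3 a b c.
have := h3 (a + c) b.
have -> : (a + c) * b * (a + c) = a * b * a + (a * b * c + c * b * a) + c * b * c.
  by acnorm; acsolve.
rewrite !hadd h3 h3.
have -> : (al a + al c) * al b * (al a + al c) =
  al a * al b * al a + (al a * al b * al c + al c * al b * al a) + al c * al b * al c.
  by acnorm; acsolve.
by move/addIr/addrI.
Qed.

Definition Inv (R R' : pzRingType) (al : R -> R') (Y : quad R) (Y' : quad R') : Prop :=
  [/\ al (q11 Y) = q11 Y', al (q22 Y) = q22 Y',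
      forall z, al (q21 Y * z + z * q12 Y) = q21 Y' * al z + al z * q12 Y'
    & forall z, al (q12 Y * z + z * q21 Y) = q12 Y' * al z + al z * q21 Y'].

Lemma Inv_step (R R' : pzRingType) (al : R -> R') t Y Y' :
  jordan_hom al -> Inv al Y Y' -> Inv al (step t Y) (step (al t) Y').
Proof.
move=> J [i11 i22 p1 p2]; have [hadd h1 h3] := J.
split => /=.
- by rewrite -(addrA (t * q11 Y * t)) hadd hadd h3 p1 i11 i22 !addrA.

- by [].
- move=> z.
  have -> : - (q11 Y * t + q12 Y) * z + z * - (t * q11 Y + q21 Y)
    = - ((q11 Y * t * z + z * t * q11 Y) + (q12 Y * z + z * q21 Y)).
    by acnorm; acsolve.
  rewrite (jhN J) hadd (jh3 J) p2 i11.
  by acnorm; acsolve.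
- move=> z.
  have -> : - (t * q11 Y + q21 Y) * z + z * - (q11 Y * t + q12 Y)
    = - ((t * q11 Y * z + z * q11 Y * t) + (q21 Y * z + z * q12 Y)).
    by acnorm; acsolve.
  rewrite (jhN J) hadd (jh3 J) p1 i11.
  by acnorm; acsolve.
Qed.

Lemma Inv_iter (R R' : pzRingType) (al : R -> R') (T : nat -> R) n :
  jordan_hom al -> forall Y Y', Inv al Y Y' ->
  Inv al (iterY T n Y) (iterY (fun i => al (T i)) n Y').
Proof.
move=> J; elim: n => [|n IH] Y Y' I //=.
by apply: IH; apply: Inv_step.
Qed.

Lemma Inv_E1 (R R' : pzRingType) (al : R -> R') :
  jordan_hom al -> Inv al (E1 R) (E1 R').
Proof.
move=> J; have [hadd h1 h3] := J.
by split=> /= [||z|z]; rewrite ?mul0r ?mulr0 ?addr0 ?(jh0 J).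
Qed.

Lemma eval_e1 (R : pzRingType) (T : nat -> R) (m : nat) :
  zeval T (e1 (Posz m)) = As T m.
Proof.
rewrite /e1 /e_poly.
have -> : absz (Posz m + 2) = m.+2 by rewrite -PoszD absz_nat addn2.
by rewrite /= zeval_cc.
Qed.

Lemma eval_e1t (R : pzRingType) (T : nat -> R) (m : nat) :
  zeval T (e1_tilde (Posz m)) = Bs T m.
Proof.
rewrite /e1_tilde /e_poly.
have -> : absz (Posz m + 2) = m.+2 by rewrite -PoszD absz_nat addn2.
case: m => [|m]; first by [].
have -> : (1 <= Posz m.+1) = true by [].
have -> : eseq m.+3 = (epair m.+1).2 by [].
rewrite zeval_zsubst zeval_cc /Bs; apply: cc_ext => i Hi.
by rewrite /rv Hi.
Qed.

Lemma main_nat (m : nat) : jordan_property (Mul (e1 (Posz m)) (e1_tilde (Posz m))).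
Proof.
move=> R R' al J T /=.
rewrite !eval_e1 !eval_e1t !AB_iter.
by case: (Inv_iter T m J (Inv_E1 J)).
Qed.

Theorem proposition3p4 (n : int) (hn : -2 <= n) :
  jordan_property (Mul (e1 n) (e1_tilde n)).
Proof.
case: n hn => [m _|j hj]; first exact: main_nat.
case: j hj => [|[|j]] hj.
- move=> R R' al J T /=; rewrite /e1 /e1_tilde /=.
  by rewrite !mul0r (jh0 J).
- move=> R R' al J T /=; rewrite /e1 /e1_tilde /=.
  have [_ h1 _] := J.
  by rewrite !mulrNN !mulr1 h1.
- by move: hj; rewrite NegzE; lia.
Qed.
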